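(* Every loopless $3$-irregular subcubic multigraph has a $(1^2,2^2)$-packing edge-coloring.
   Context: A multigraph may have parallel edges; the degree of a vertex counts edges with multiplicity. A multigraph is subcubic if every vertex has degree at most $3$. A multigraph is $3$-irregular if no two adjacent vertices both have degree $3$. The distance between two edges is the distance between the corresponding vertices in the line graph (so two edges sharing an endpoint, including parallel edges, are at distance $1$). A $(1^2,2^2)$-packing edge-coloring of $G$ is a partition of $E(G)$ into four sets $E_1,E_2,E_3,E_4$ such that any two distinct edges in $E_1$, or any two in $E_2$, are at distance at least $2$ (i.e. $E_1,E_2$ are matchings), and any two distinct edges in $E_3$, or any two in $E_4$, are at distance at least $3$ (i.e. $E_3,E_4$ are induced matchings). *)

(* Defs.v *)
From mathcomp Require Import all_boot.
Set Implicit Arguments. Unset Strict Implicit. Unset Printing Implicit Defensive.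

(* A finite multigraph: vertex type V, edge type E (parallel edges are
   distinct elements of E with the same endpoints), endpoint map ends. *)
Section Multigraph.
Variables (V E : finType) (ends : E -> V * V).

Definition incident (v : V) (e : E) : bool := (v == (ends e).1) || (v == (ends e).2).

Definition loopless : Prop := forall e, (ends e).1 != (ends e).2.

(* degree with multiplicity (for loopless graphs each incident edge counts once) *)
Definition deg (v : V) : nat := #|[set e | incident v e]|.

Definition subcubic : Prop := forall v, deg v <= 3.

Definition adjacent (u v : V) : bool := [exists e, (ends e == (u, v)) || (ends e == (v, u))].

Definition three_irregular : Prop :=
  forall u v, adjacent u v -> ~ (deg u = 3 /\ deg v = 3).

Definition edge_adj (e f : E) : bool :=
  (e != f) && [exists v, incident v e && incident v f].

Definition is_matching (M : {set E}) : Prop :=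
  forall e f, e \in M -> f \in M -> e != f -> ~~ edge_adj e f.

Definition is_induced_matching (M : {set E}) : Prop :=
  forall e f, e \in M -> f \in M -> e != f ->
    ~~ edge_adj e f /\ ~ (exists g, edge_adj e g /\ edge_adj g f).

(* a (1^2,2^2)-packing edge-coloring: a map c : E -> 'I_4 (i.e. a partition
   of E into E_0..E_3), color classes 0,1 matchings, 2,3 induced matchings *)
Definition packing_1122 (c : E -> 'I_4) : Prop :=
  is_matching [set e | val (c e) == 0] /\
  is_matching [set e | val (c e) == 1] /\
  is_induced_matching [set e | val (c e) == 2] /\
  is_induced_matching [set e | val (c e) == 3].

End Multigraph.

(* Main.v *)
Require Import Defs.
From mathcomp Require Import all_boot.
From mathcomp Require Import zify.
From Stdlib Require Import Lia.
Set Implicit Arguments. Unset Strict Implicit. Unset Printing Implicit Defensive.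

(* Proof strategy: take a vertex bipartition s0 maximising the cut (then minimising
   the number of degree-3 vertices all of whose edges are cut).  Non-cut edges form a
   matching coloured by side (colours 2/3); every "bad" degree-3 vertex selects one
   extra edge, coloured by a rule using a second extremal labelling t0.  The remaining
   edges are cut edges of maximum degree 2, properly 2-coloured (colours 0/1) by a
   Kempe-chain argument. *)

Section Basic.
Variables (V E : finType) (ends : E -> V * V).
Hypothesis Hll : loopless ends.

Definition othv (e : E) (v : V) : V := if (ends e).1 == v then (ends e).2 else (ends e).1.

Lemma incE u e : incident ends u e = (u == (ends e).1) || (u == (ends e).2).
Proof. by []. Qed.

Lemma inc_oth u e : incident ends u e -> incident ends (othv e u) e.
Proof. rewrite /othv !incE; case: (ends e) => a b /= _; by case: (a == u); rewrite eqxx ?orbT. Qed.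

Lemma oth_neq u e : incident ends u e -> othv e u != u.
Proof.
have := Hll e; rewrite /othv incE; case: (ends e) => a b /= ne /orP[]/eqP->.
  by rewrite eqxx eq_sym.
by rewrite (negbTE ne).
Qed.

Lemma inc_cases u v e : incident ends u e -> incident ends v e -> v = u \/ v = othv e u.
Proof.
rewrite /othv !incE; case: (ends e) => a b /= /orP[]/eqP-> /orP[]/eqP->; rewrite ?eqxx; auto.
- by case: (a =P b) => [->|]; auto.
Qed.

Lemma oth_oth u e : incident ends u e -> othv e (othv e u) = u.
Proof.
move=> hu; have ho := inc_oth hu; have hne := oth_neq hu.
case: (inc_cases ho hu) => // h.
by move: hne; rewrite -h eqxx.
Qed.

Definition iset (u : V) := [set e | incident ends u e].

Lemma deg_iset u : deg ends u = #|iset u|. Proof. by []. Qed.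

Lemma deg2_cases u h g f : deg ends u <= 2 -> incident ends u h -> incident ends u g -> h != g ->
  incident ends u f -> (f == h) || (f == g).
Proof.
move=> hd ih ig hg iff; apply/negPn/negP; rewrite negb_or => /andP[fh fg].
have : #|f |: (g |: [set h])| <= deg ends u.
  rewrite deg_iset; apply: subset_leq_card; apply/subsetP => x; rewrite !inE.
  by case/orP=> [/eqP->|/orP[]/eqP->].
rewrite !cardsU1 !inE cards1 (negbTE fh) (negbTE fg) eq_sym hg /=.
by move=> /leq_trans /(_ hd).
Qed.

Lemma edge_adjP e f : reflect (e <> f /\ exists v, incident ends v e /\ incident ends v f) (edge_adj ends e f).
Proof.
apply: (iffP andP) => [[/eqP ne /existsP[v /andP[a b]]]|[ne [v [a b]]]].
  by split=> //; exists v.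
by split; [apply/eqP|apply/existsP; exists v; rewrite a b].
Qed.

Lemma packing_of_local (c : E -> 'I_4) :
  (forall u f f', incident ends u f -> incident ends u f' -> f != f' -> c f != c f') ->
  (forall g a b f f', incident ends a g -> incident ends b g -> a != b -> f != g -> f' != g -> f != f' ->
     incident ends a f -> incident ends b f' -> c f = c f' -> val (c f) < 2) ->
  packing_1122 ends c.
Proof.
move=> H1 H2.
have Hm : forall k, is_matching ends [set e | val (c e) == k].
  move=> k e f; rewrite !inE => /eqP ce /eqP cf ne; apply/negP => /edge_adjP[_ [v [a b]]].
  by move: (H1 v e f a b ne); rewrite -val_eqE /= ce cf eqxx.
have Hi : forall k, 2 <= k -> is_induced_matching ends [set e | val (c e) == k].
  move=> k hk e f he hf ne; split; first exact: (Hm k e f he hf ne).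
  move: he hf; rewrite !inE => /eqP ce /eqP cf.
  move=> [g [/edge_adjP[neg [a [ae ag]]] /edge_adjP[ngf [b [bg bf]]]]].
  have cef : c e = c f by apply: val_inj; rewrite /= ce cf.
  case: (eqVneq a b) => [ab|ab].
    by subst b; move: (H1 a e f ae bf ne); rewrite cef eqxx.
  have := H2 g a b e f ag bg ab (introN eqP neg) _ ne ae bf cef.
  have fg : f != g by apply/eqP => h; exact: ngf (esym h).
  by move/(_ fg); rewrite ce ltnNge hk.
split; first exact: Hm. split; first exact: Hm. by split; apply: Hi.
Qed.

End Basic.

Section ABcol.
Variables (V E : finType) (ends : E -> V * V).
Hypothesis Hll : loopless ends.
Variable sg : V -> bool.

Definition okab (P : {set E}) (ab : E -> bool) :=
  forall u f f', f \in P -> f' \in P -> incident ends u f -> incident ends u f' -> f != f' -> ab f != ab f'.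

Definition Pdeg (P : {set E}) u := #|[set e in P | incident ends u e]|.

Lemma three_in (P : {set E}) u h g f : Pdeg P u <= 2 -> h \in P -> g \in P -> f \in P ->
  incident ends u h -> incident ends u g -> incident ends u f -> h != g -> (f == h) || (f == g).
Proof.
move=> hd hP gP fP ih ig iff hg; apply/negPn/negP; rewrite negb_or => /andP[fh fg].
have : #|f |: (g |: [set h])| <= Pdeg P u.
  apply: subset_leq_card; apply/subsetP => x; rewrite !inE.
  by case/orP=> [/eqP->|/orP[]/eqP->]; rewrite ?fP ?gP ?hP.
rewrite !cardsU1 !inE cards1 (negbTE fh) (negbTE fg) eq_sym hg /=.
by move=> /leq_trans /(_ hd).
Qed.

Lemma sg_oth e z : sg (ends e).1 != sg (ends e).2 -> incident ends z e -> sg (othv ends e z) = ~~ sg z.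
Proof.
rewrite /othv incE; case: (ends e) => a b /= hab /orP[] /eqP zz; subst z.
  by rewrite eqxx; move: hab; case: (sg a); case: (sg b).
case: (a =P b) => [ab|_]; first by move: hab; rewrite ab eqxx.
by move: hab; case: (sg a); case: (sg b).
Qed.

Lemma ab_exists n : forall P : {set E}, #|P| <= n ->
  (forall e, e \in P -> sg (ends e).1 != sg (ends e).2) ->
  (forall u, Pdeg P u <= 2) -> exists ab : E -> bool, okab P ab.
Proof.
elim: n => [|n IH] P hc hcut hdeg.
  exists (fun _ => false) => u f f' fP; move: hc; rewrite leqn0 => /eqP/cards0_eq P0.
  by move: fP; rewrite P0 inE.
case: (set_0Vmem P) => [->|[e eP]].
  by exists (fun _ => false) => u f f'; rewrite inE.
set P' := P :\ e.
have P'sub : P' \subset P by apply: subsetDl.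
have hdeg' : forall u, Pdeg P' u <= 2.
  move=> u; apply: leq_trans (hdeg u); apply: subset_leq_card; apply/subsetP => f.
  by rewrite !inE => /andP[/andP[_ ->] ->].
have hcut' : forall f, f \in P' -> sg (ends f).1 != sg (ends f).2.
  by move=> f; rewrite inE => /andP[_]; apply: hcut.
have [ab hab] : exists ab, okab P' ab.
  apply: IH => //; move: hc; rewrite (cardsD1 e P) eP add1n ltnS.
  by rewrite /P' setDE.
set x := (ends e).1. set y := (ends e).2.
have ix : incident ends x e by rewrite incE eqxx.
have iy : incident ends y e by rewrite incE eqxx orbT.
have sxy : sg y = ~~ sg x by move: (hcut e eP); rewrite -/x -/y; case: (sg x); case: (sg y).
have uniq_at : forall z f g, incident ends z e -> f \in P' -> g \in P' -> incident ends z f -> incident ends z g -> f = g.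
  move=> z f g iz fP gP zf zg; move: fP gP; rewrite !inE => /andP[fe fP] /andP[ge gP].
  case: (eqVneq f g) => // fg.
  by move: (three_in (hdeg z) fP gP eP zf zg iz fg); rewrite eq_sym (negbTE fe) eq_sym (negbTE ge).
have ext : forall ab0 : E -> bool, okab P' ab0 ->
   (forall f g, f \in P' -> g \in P' -> incident ends x f -> incident ends y g -> ab0 f = ab0 g) ->
   exists ab, okab P ab.
  move=> ab0 ok0 same.
  pose c0 := if [pick f in P' | incident ends x f] is Some f then ~~ ab0 f
             else if [pick f in P' | incident ends y f] is Some f then ~~ ab0 f else false.
  have hc0 : forall z f, incident ends z e -> f \in P' -> incident ends z f -> c0 = ~~ ab0 f.
    move=> z f iz fP zf; rewrite /c0.
    have zxy : z = x \/ z = y by move: iz; rewrite incE => /orP[]/eqP; auto.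
    case: pickP => [f1 /andP[f1P xf1]|nx].
      case: zxy => zz; subst z; first by rewrite (uniq_at x f1 f ix f1P fP xf1 zf).
      by rewrite (same f1 f).
    case: pickP => [f2 /andP[f2P yf2]|ny].
      case: zxy => zz; subst z; first by move: (nx f); rewrite /= fP zf.
      by rewrite (uniq_at y f2 f iy f2P fP yf2 zf).
    by case: zxy => zz; subst z; [move: (nx f) | move: (ny f)]; rewrite /= fP zf.
  exists (fun f => if f == e then c0 else ab0 f) => u f f' fP f'P uf uf' ff'.
  case: (eqVneq f e) => [fe|fe]; case: (eqVneq f' e) => [f'e|f'e].
  - by move: ff'; rewrite fe f'e eqxx.
  - subst f; have f'P' : f' \in P' by rewrite !inE f'e.
    by rewrite (hc0 u f' uf f'P' uf'); case: (ab0 f').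
  - subst f'; have fP' : f \in P' by rewrite !inE fe.
    by rewrite (hc0 u f uf' fP' uf); case: (ab0 f).
  - have fP' : f \in P' by rewrite !inE fe.
    have f'P' : f' \in P' by rewrite !inE f'e.
    exact: (ok0 u f f' fP' f'P' uf uf' ff').
case: (pickP [pred f in P' | incident ends x f]) => [p /andP[pP xp]|nx]; last first.
  apply: (ext ab hab) => f g fP _ xf _; by move: (nx f); rewrite /= fP xf.
case: (pickP [pred f in P' | incident ends y f]) => [q /andP[qP yq]|ny]; last first.
  apply: (ext ab hab) => f g _ gP _ yg; by move: (ny g); rewrite /= gP yg.
case: (eqVneq (ab p) (ab q)) => [pq|pq].
  apply: (ext ab hab) => f g fP gP xf yg.
  by rewrite (uniq_at x f p ix fP pP xf xp) (uniq_at y g q iy gP qP yg yq).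
(* Kempe swap on the component of q *)
pose R := [rel f g | [&& f \in P', g \in P', f != g & [exists u, incident ends u f && incident ends u g]]].
have Rsym : forall f g, R f g = R g f.
  move=> f g; rewrite /= andbCA eq_sym; congr (_ && (_ && (_ && _))).
  by apply/existsP/existsP => [][u /andP[a b]]; exists u; rewrite a b.
have Rab : forall f g, R f g -> ab f != ab g.
  move=> f g /and4P[fP gP fg /existsP[u /andP[uf ug]]]; exact: (hab u f g fP gP uf ug fg).
pose K := connect R q.
have Kclosed : forall f g, R f g -> K f = K g.
  move=> f g Rfg; rewrite /K; apply/idP/idP => Kf.
    exact: (connect_trans Kf (@connect1 _ R f g Rfg)).
  have Rgf : R g f by rewrite Rsym.
  exact: (connect_trans Kf (@connect1 _ R g f Rgf)).
pose ab1 f := if K f then ~~ ab f else ab f.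
have ok1 : okab P' ab1.
  move=> u f f' fP f'P uf uf' ff'.
  have Rff : R f f' by rewrite /= fP f'P ff' /=; apply/existsP; exists u; rewrite uf uf'.
  have := hab u f f' fP f'P uf uf' ff'.
  by rewrite /ab1 (Kclosed f f' Rff); case: (K f'); case: (ab f); case: (ab f').
have Kq : K q by exact: connect0.
case Kp: (K p); last first.
  apply: (ext ab1 ok1) => f g fP gP xf yg.
  rewrite (uniq_at x f p ix fP pP xf xp) (uniq_at y g q iy gP qP yg yq) /ab1 Kp Kq.
  by move: pq; case: (ab p); case: (ab q).
exfalso.
pose J f z (pv : option E) := [/\ f \in P', incident ends z f, ab f (+) sg z = ab q (+) sg y,
  (forall g, g \in P' -> incident ends z g -> g = f \/ pv = Some g) &
  ((forall g, pv = Some g -> [/\ incident ends z g, g \in P' & g != f]) /\ (pv = None -> f = q))].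
have walk : forall s f z (pv : option E), path R f s -> uniq (f :: s) ->
    (forall g, pv = Some g -> g \notin f :: s) -> J f z pv -> exists z' pv', J (last f s) z' pv'.
  elim=> [|g s' IHs] f z pv /=; first by move=> _ _ _ Jf; exists z, pv.
  move=> /andP[Rfg ps] /andP[fns us] hpv [fP zf vf atz [pvz pvn]].
  have Rfg' := Rfg; move: Rfg' => /and4P[_ gP fg /existsP[u /andP[uf ug]]].
  have uz : u != z.
    apply/eqP => uz; subst u.
    case: (atz g gP ug) => [gf|pg]; first by move: fg; rewrite gf eqxx.
    by move: (hpv g pg); rewrite !inE eqxx orbT.
  have uo : u = othv ends f z by case: (inc_cases zf uf) => // h; move: uz; rewrite h eqxx.
  apply: (IHs g u (Some f) ps us).
    by move=> h [<-]; exact: fns.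
  rewrite /J; split => //; last split => //.
  - have su : sg u = ~~ sg z by rewrite uo; apply: sg_oth => //; exact: hcut'.
    have abg : ab g = ~~ ab f by move: (Rab f g Rfg); case: (ab f); case: (ab g).
    by rewrite su abg -vf; case: (ab f); case: (sg z).
  - move=> h hP uh; case/orP: (three_in (hdeg' u) fP gP hP uf ug uh fg) => /eqP ->; auto.
  - by move=> h [<-]; split => //; rewrite eq_sym.
have [s ps lp] : exists2 s, path R q s & p = last q s by apply/connectP.
case: (shortenP ps) lp => s2 ps2 us2 _ lp2.
have Jq : J q y None.
  rewrite /J; split => //; first by move=> g gP yg; left; exact: (uniq_at y g q iy gP qP yg yq).
have [z' [pv' [_ zp vp _ [pvz pvn]]]] := walk s2 q y None ps2 us2 (fun g h => match h with end) Jq.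
rewrite -lp2 in zp vp pvz pvn.
case: (inc_cases xp zp) => zz.
  subst z'; case: pv' pvz pvn => [g|] pvz pvn.
    have [xg gP gp] := pvz g erefl.
    by move: gp; rewrite (uniq_at x g p ix gP pP xg xp) eqxx.
  by move: pq; rewrite (pvn erefl) eqxx.
have sz : sg z' = ~~ sg x by rewrite zz; apply: sg_oth => //; exact: hcut'.
move: vp; rewrite sz sxy => h.
have abpq : ab p = ab q by move: h; case: (ab p); case: (ab q); case: (sg x).
by move: pq; rewrite abpq eqxx.
Qed.
End ABcol.

Section Main.
Variables (V E : finType) (ends : E -> V * V).
Hypotheses (Hll : loopless ends) (Hsc : subcubic ends) (Hirr : three_irregular ends).

Local Notation inc := (incident ends).
Local Notation dg := (deg ends).
Local Notation oth := (othv ends).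

Lemma ends_oth v e : inc v e -> (ends e == (v, oth e v)) || (ends e == (oth e v, v)).
Proof.
have := Hll e; rewrite /othv incE; case: (ends e) => a b /= ne /orP[] /eqP zz; subst v.
  by rewrite eqxx /= eqxx.
case: (a =P b) => [ab|_]; first by move: ne; rewrite ab eqxx.
by rewrite eqxx orbT.
Qed.

Lemma nbr_deg v e : dg v = 3 -> inc v e -> dg (oth e v) <= 2.
Proof.
move=> dv ve; have := Hsc (oth e v); rewrite leq_eqVlt => /orP[/eqP d3|]; last by [].
exfalso; apply: (Hirr (u:=v) (v:=oth e v)); last by split.
by apply/existsP; exists e; apply: ends_oth.
Qed.

Definition cutb (s : {ffun V -> bool}) e := s (ends e).1 != s (ends e).2.
Definition ncut s := #|[set e | cutb s e]|.
Definition badb (s : {ffun V -> bool}) v := (dg v == 3) && [forall e, inc v e ==> cutb s e].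
Definition nbad s := #|[set v | badb s v]|.
Definition score s := ncut s * (#|V|.+1) + (#|V| - nbad s).
Definition flip (s : {ffun V -> bool}) x : {ffun V -> bool} := [ffun u => if u == x then ~~ s u else s u].

Lemma cut_flip s x e : cutb (flip s x) e = cutb s e (+) inc x e.
Proof.
rewrite /cutb /flip !ffunE incE; have := Hll e; case: (ends e) => a b /= ab.
rewrite (eq_sym x a) (eq_sym x b).
case ax: (a == x); case bx: (b == x) => /=.
- by move: ab; rewrite (eqP ax) (eqP bx) eqxx.
- by case: (s a); case: (s b).
- by case: (s a); case: (s b).
- by case: (s a); case: (s b).
Qed.

Lemma score_lt1 s s' : ncut s < ncut s' -> score s < score s'.
Proof.
move=> h; rewrite /score.
apply: (@leq_trans ((ncut s).+1 * #|V|.+1)).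
  rewrite mulSn addnC ltn_add2r ltnS; exact: leq_subr.
apply: leq_trans (leq_addr _ _); exact: leq_mul.
Qed.

Lemma score_lt2 s s' : ncut s = ncut s' -> nbad s' < nbad s -> score s < score s'.
Proof.
move=> h1 h2; rewrite /score h1 ltn_add2l.
have hb : nbad s <= #|V| by apply: max_card.
by rewrite ltn_sub2l // (leq_trans h2 hb).
Qed.

Definition s0 := [arg max_(s > [ffun _ => false]) score s].
Lemma s0_max s : score s <= score s0.
Proof. by rewrite /s0; case: arg_maxnP => // t _; apply. Qed.

Lemma ncut_flip s x : ncut (flip s x) + #|[set e | cutb s e] :&: iset ends x| =
                      ncut s + #|iset ends x :\: [set e | cutb s e]|.
Proof.
rewrite /ncut.
have -> : [set e | cutb (flip s x) e] = ([set e | cutb s e] :\: iset ends x) :|: (iset ends x :\: [set e | cutb s e]).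
  by apply/setP => e; rewrite !inE cut_flip; case: (cutb s e); case: (inc x e).
rewrite cardsU.
have -> : ([set e | cutb s e] :\: iset ends x) :&: (iset ends x :\: [set e | cutb s e]) = set0.
  apply/setP => e; rewrite !inE; case: (cutb s e); case: (inc x e); by rewrite ?andbF.
rewrite cards0 subn0 -[#|[set e | cutb s e]|](cardsID (iset ends x)).
set a := #|_ :\: iset ends x|; set b := #|iset ends x :\: _|; set c := #|_ :&: iset ends x|.
by rewrite addnAC (addnC a c).
Qed.

Lemma same_le1 v : #|[set e | inc v e && ~~ cutb s0 e]| <= 1.
Proof.
rewrite leqNgt; apply/negP => h2.
set A := [set e | cutb s0 e].
have hI : #|A :&: iset ends v| + #|iset ends v :\: A| = dg v.
  by rewrite deg_iset -(cardsID A (iset ends v)) setIC.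
have hN : #|iset ends v :\: A| = #|[set e | inc v e && ~~ cutb s0 e]|.
  by apply: eq_card => e; rewrite !inE andbC.
have hdv := Hsc v.
have : ncut s0 < ncut (flip s0 v).
  have := ncut_flip s0 v; rewrite -/A => hf.
  move: hI hdv hf h2; rewrite hN; lia.
move/score_lt1; rewrite ltnNge s0_max //.
Qed.

Lemma bad_deg s v : badb s v -> dg v = 3.
Proof. by case/andP=> /eqP. Qed.

Lemma bad_cut s v e : badb s v -> inc v e -> cutb s e.
Proof. by case/andP=> _ /forallP /(_ e) /implyP. Qed.

Lemma tc_partner v e f : badb s0 v -> inc v e -> f != e -> inc (oth e v) f -> ~~ cutb s0 f ->
  dg (oth f (oth e v)) = 3.
Proof.
move=> bv ve fe xf nf; set x := oth e v in xf *; set y := oth f x.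
apply/eqP/negPn/negP => ny.
have dv := bad_deg bv.
have dx : dg x <= 2 := nbr_deg dv ve.
have xe : inc x e := inc_oth ve.
have iso : forall g, inc x g -> g = e \/ g = f.
  move=> g xg; case/orP: (deg2_cases dx xe xf (introN eqP (fun h => (negP fe) (introT eqP (esym h)))) xg) => /eqP; auto.
have ce : cutb s0 e := bad_cut bv ve.
set s' := flip s0 x.
have hc : ncut s0 = ncut s'.
  have := ncut_flip s0 x; rewrite -/s'.
  have -> : [set e0 | cutb s0 e0] :&: iset ends x = [set e].
    apply/setP => g; rewrite !inE; apply/andP/eqP => [[cg xg]|->]; last by rewrite ce xe.
    by case: (iso g xg) => // gf; move: cg nf; rewrite gf => ->.
  have -> : iset ends x :\: [set e0 | cutb s0 e0] = [set f].
    apply/setP => g; rewrite !inE; apply/andP/eqP => [[cg xg]|->]; last by rewrite nf xf.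
    by case: (iso g xg) => // ge; move: cg; rewrite ge ce.
  rewrite !cards1; lia.
have hb : nbad s' < nbad s0.
  apply: proper_card; apply/properP; split.
    apply/subsetP => u; rewrite !inE /badb => /andP[du /forallP hu]; rewrite du /=.
    case: (eqVneq u v) => [->|uv]; first by case/andP: bv.
    apply/forallP => g; apply/implyP => ug; have := implyP (hu g) ug.
    rewrite /s' cut_flip; case xg: (inc x g); last by rewrite addbF.
    exfalso; case: (iso g xg) => gg; subst g.
      case: (inc_cases ve ug) => uu; first by move: uv; rewrite uu eqxx.
      by move: dx; rewrite /x -uu (eqP du).
    case: (inc_cases xf ug) => uu; first by move: dx; rewrite -uu (eqP du).
    by move: ny; rewrite /y -uu (eqP du).
  exists v; first by rewrite inE.
  rewrite inE negb_and; apply/orP; right; rewrite negb_forall; apply/existsP; exists e.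
  by rewrite negb_imply ve /s' cut_flip ce xe.
by have := score_lt2 hc hb; rewrite ltnNge s0_max.
Qed.

Definition cut e := cutb s0 e.
Definition bad v := badb s0 v.
Definition tc v e := [&& bad v, inc v e & [exists f, (f != e) && inc (oth e v) f && ~~ cut f]].
Definition hitw v e w := [&& bad v, inc v e, bad w, w != v &
   [exists f, (f != e) && inc (oth e v) f && (oth f (oth e v) == w)]].
Definition hit v e := [exists w, hitw v e w].
Definition prv v e := [&& bad v, inc v e, ~~ tc v e & ~~ hit v e].
Definition hasTC v := [exists e, tc v e].
Definition hasPrv v := [exists e, prv v e].
Definition chi (t : {ffun V -> bool}) v := if hasTC v then s0 v else if hasPrv v then ~~ s0 v else t v.
Definition Phi t := #|[set e | [exists v, [exists w, hitw v e w && (chi t v != chi t w)]]]|.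
Definition t0 := [arg max_(t > [ffun _ => false]) Phi t].
Lemma t0_max t : Phi t <= Phi t0.
Proof. by rewrite /t0; case: arg_maxnP => // t1 _; apply. Qed.

Lemma hitw_sym v e w : hitw v e w -> exists f, hitw w f v.
Proof.
case/and5P=> bv ve bw wv /existsP[f /andP[/andP[fe xf] /eqP yw]].
have we : inc w f by rewrite -yw; exact: inc_oth.
exists f; apply/and5P; split => //; first by rewrite eq_sym.
apply/existsP; exists e.
have hx : oth f w = oth e v by rewrite -yw oth_oth.
by rewrite hx eq_sym fe /= (inc_oth ve) /= oth_oth.
Qed.

Lemma hitw_bad v e w : hitw v e w -> bad v /\ inc v e.
Proof. by case/and5P. Qed.

Lemma bad_S v : bad v -> dg v = 3.
Proof. exact: bad_deg. Qed.

Lemma nbr_not_bad v e : bad v -> inc v e -> ~~ bad (oth e v).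
Proof.
move=> bv ve; apply/negP => /bad_S d3.
by have := nbr_deg (bad_S bv) ve; rewrite d3.
Qed.

Lemma iset_nonempty v : dg v = 3 -> exists e, inc v e.
Proof.
move=> d; case: (set_0Vmem (iset ends v)) => [h|[e]]; last by rewrite inE; exists e.
by move: d; rewrite deg_iset h cards0.
Qed.

Lemma trapped_ex v : bad v -> ~~ hasTC v -> ~~ hasPrv v ->
  exists e, exists w, hitw v e w && (chi t0 v != chi t0 w).
Proof.
move=> bv ntc npr.
case: (boolP [exists e, [exists w, hitw v e w && (chi t0 v != chi t0 w)]]) => [/existsP[e /existsP[w h]]|H].
  by exists e, w.
exfalso.
have H' : forall e w, hitw v e w -> chi t0 v = chi t0 w.
  move=> e w h; apply/eqP; apply/negPn/negP => d; move/negP: H; apply.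
  by apply/existsP; exists e; apply/existsP; exists w; rewrite h d.
have [e0 ve0] := iset_nonempty (bad_S bv).
have [w0 h0] : exists w, hitw v e0 w.
  suff : hit v e0 by move/existsP.
  move: npr; rewrite /hasPrv negb_exists => /forallP /(_ e0).
  move: ntc; rewrite /hasTC negb_exists => /forallP /(_ e0) ntc0.
  by rewrite /prv bv ve0 ntc0 /= negbK.
set t' := flip t0 v.
have chiv : chi t' v = ~~ chi t0 v.
  by rewrite /chi (negbTE ntc) (negbTE npr) /t' /flip ffunE eqxx.
have chiu : forall u, u != v -> chi t' u = chi t0 u.
  by move=> u uv; rewrite /chi /t' /flip ffunE (negbTE uv).
have : Phi t0 < Phi t'.
  apply: proper_card; apply/properP; split.
    apply/subsetP => e; rewrite !inE => /existsP[v1 /existsP[w1 /andP[h1 d1]]].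
    apply/existsP; exists v1; apply/existsP; exists w1; rewrite h1 /=.
    case: (eqVneq v1 v) => [ev|nv1].
      by subst v1; move: d1; rewrite (H' e w1 h1) eqxx.
    case: (eqVneq w1 v) => [ew|nw1].
      subst w1; have [f hf] := hitw_sym h1.
      by move: d1; rewrite (H' f v1 hf) eqxx.
    by rewrite (chiu v1 nv1) (chiu w1 nw1).
  exists e0.
    rewrite inE; apply/existsP; exists v; apply/existsP; exists w0; rewrite h0 /=.
    have w0v : w0 != v by case/and5P: h0.
    by rewrite chiv (chiu w0 w0v) (H' e0 w0 h0); case: (chi t0 w0).
  rewrite inE; apply/negP => /existsP[v1 /existsP[w1 /andP[h1 d1]]].
  have [bv1 v1e] := hitw_bad h1.
  case: (inc_cases ve0 v1e) => vv.
    by subst v1; move: d1; rewrite (H' e0 w1 h1) eqxx.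
  by move: (nbr_not_bad bv ve0); rewrite -vv bv1.
by rewrite ltnNge t0_max.
Qed.

Definition hitc v e := [exists w, hitw v e w && (chi t0 v != chi t0 w)].
Definition sel v : option E :=
  if [pick e | tc v e] is Some e then Some e
  else if [pick e | prv v e] is Some e then Some e
  else [pick e | hitc v e].

Lemma sel_bi v e : sel v = Some e -> bad v /\ inc v e.
Proof.
rewrite /sel; case: pickP => [e1 h1 [<-]|_]; first by case/and3P: h1.
case: pickP => [e2 h2 [<-]|_]; first by case/and4P: h2.
case: pickP => [e3 /existsP[w /andP[h3 _]] [<-]|_ //]; exact: hitw_bad h3.
Qed.

Lemma sel_nontc v e : sel v = Some e -> ~~ tc v e -> ~~ hasTC v.
Proof.
rewrite /sel /hasTC; case: pickP => [e1 h1 [<-]|n1 _ _]; first by rewrite h1.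
by apply/negP => /existsP[e1]; rewrite n1.
Qed.

Lemma sel_K3 v e : sel v = Some e -> ~~ tc v e -> ~~ prv v e -> hitc v e.
Proof.
rewrite /sel; case: pickP => [e1 h1 [<-]|_]; first by rewrite h1.
case: pickP => [e2 h2 [<-]|_]; first by rewrite h2.
by case: pickP => [e3 h3 [<-]|_ //].
Qed.

Lemma sel_some v : bad v -> exists e, sel v = Some e.
Proof.
move=> bv; rewrite /sel; case: pickP => [e1 _|n1]; first by exists e1.
case: pickP => [e2 _|n2]; first by exists e2.
case: pickP => [e3 _|n3]; first by exists e3.
have ntc : ~~ hasTC v by apply/negP => /existsP[e]; rewrite n1.
have npr : ~~ hasPrv v by apply/negP => /existsP[e]; rewrite n2.
have [e [w h]] := trapped_ex bv ntc npr.
have : hitc v e by apply/existsP; exists w.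
by rewrite n3.
Qed.

Lemma chi_tc v e : tc v e -> chi t0 v = s0 v.
Proof. by move=> h; rewrite /chi; have -> : hasTC v by apply/existsP; exists e. Qed.

Lemma chi_prv v e : ~~ hasTC v -> prv v e -> chi t0 v = ~~ s0 v.
Proof. by move=> ntc h; rewrite /chi (negbTE ntc); have -> : hasPrv v by apply/existsP; exists e. Qed.

Definition isS e := [exists v, sel v == Some e].
Definition isQ e := ~~ cut e || isS e.
Definition owner e := if bad (ends e).1 then (ends e).1 else (ends e).2.
Definition qcol e := if cut e then chi t0 (owner e) else s0 (ends e).1.

Lemma cut_oth e u : cut e -> inc u e -> s0 (oth e u) = ~~ s0 u.
Proof. move=> ce ue; exact: (sg_oth (sg := s0) ce ue). Qed.

Lemma sel_cut v e : sel v = Some e -> cut e.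
Proof. by case/sel_bi => bv ve; exact: bad_cut bv ve. Qed.

Lemma owner_sel v e : sel v = Some e -> owner e = v.
Proof.
case/sel_bi => bv ve; rewrite /owner.
move: ve; rewrite incE => /orP[/eqP vv|/eqP vv]; first by rewrite -vv bv.
case: ifP => // b1; exfalso.
have ve : inc v e by rewrite incE vv eqxx orbT.
have h1 : inc (ends e).1 e by rewrite incE eqxx.
case: (inc_cases ve h1) => hh; first by have := Hll e; rewrite hh vv eqxx.
by move: (nbr_not_bad bv ve); rewrite -hh b1.
Qed.

Lemma qcol_sel v e : sel v = Some e -> qcol e = chi t0 v.
Proof. by move=> h; rewrite /qcol (sel_cut h) (owner_sel h). Qed.

Lemma qcol_nc u e : ~~ cut e -> inc u e -> qcol e = s0 u.
Proof.
move=> nc; rewrite /qcol (negbTE nc) incE => /orP[/eqP ->//|/eqP ->].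
by move: nc; rewrite /cut /cutb negbK => /eqP.
Qed.

Lemma Qkind e : isQ e -> ~~ cut e \/ exists v, sel v = Some e.
Proof. case/orP; [by left | by move/existsP=> [v /eqP h]; right; exists v]. Qed.

Lemma two_edges u h g k : dg u <= 2 -> inc u h -> inc u g -> h != g -> inc u k -> k = h \/ k = g.
Proof. by move=> d ih ig hg ik; case/orP: (deg2_cases d ih ig hg ik) => /eqP; auto. Qed.

Lemma sel_oth_deg v e : sel v = Some e -> dg (oth e v) <= 2.
Proof. by case/sel_bi => bv ve; exact: nbr_deg (bad_S bv) ve. Qed.

Lemma nc_not_bad u e : ~~ cut e -> inc u e -> ~~ bad u.
Proof. by move=> nc ue; apply/negP => bu; move: nc; rewrite /cut (bad_cut bu ue). Qed.

Lemma same_two u f f' : inc u f -> inc u f' -> f != f' -> ~~ cut f -> ~~ cut f' -> False.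
Proof.
move=> uf uf' ff nf nf'; have := same_le1 u.
have : #|[set f; f']| <= #|[set e | inc u e && ~~ cutb s0 e]|.
  apply: subset_leq_card; apply/subsetP => e; rewrite !inE => /orP[]/eqP->; by rewrite ?uf ?uf' ?nf ?nf'.
by rewrite cards2 ff => /leq_trans h /h.
Qed.

Lemma QH1_ncS u f f' v' : inc u f -> inc u f' -> f != f' -> ~~ cut f -> sel v' = Some f' ->
  qcol f != qcol f'.
Proof.
move=> uf uf' ff nf h; have [bv' v'f'] := sel_bi h.
case: (inc_cases v'f' uf') => uu.
  by subst u; move: (nc_not_bad nf uf); rewrite bv'.
have t : tc v' f'.
  apply/and3P; split => //; apply/existsP; exists f; by rewrite ff -uu uf nf.
rewrite (qcol_nc nf uf) (qcol_sel h) (chi_tc t) uu (cut_oth (sel_cut h) v'f').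
by case: (s0 v').
Qed.

Lemma QH1_SS u f f' v v' : inc u f -> inc u f' -> f != f' -> sel v = Some f -> sel v' = Some f' ->
  qcol f != qcol f'.
Proof.
move=> uf uf' ff h h'; have [bv vf] := sel_bi h; have [bv' v'f'] := sel_bi h'.
have vv' : v != v' by apply/eqP => vv; move: ff; rewrite vv h' in h; case: h => ->; rewrite eqxx.
case: (inc_cases vf uf) => ux; case: (inc_cases v'f' uf') => ux'.
- by move: vv'; rewrite -ux -ux' eqxx.
- by move: (nbr_not_bad bv' v'f'); rewrite -ux' ux bv.
- by move: (nbr_not_bad bv vf); rewrite -ux ux' bv'.
have du : dg u <= 2 by rewrite ux; exact: sel_oth_deg h.
have xf' : inc (oth f v) f' by rewrite -ux.
have ox : oth f' (oth f v) = v' by rewrite -ux ux' oth_oth.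
have hw : hitw v f v'.
  apply/and5P; split => //; first by rewrite eq_sym.
  apply/existsP; exists f'; by rewrite eq_sym ff xf' ox eqxx.
have ntc : ~~ tc v f.
  apply/negP => /and3P[_ _ /existsP[k /andP[/andP[kf xk] nk]]].
  have kin : inc u k by rewrite ux.
  case: (two_edges du uf uf' ff kin) => kk; first by move: kf; rewrite kk eqxx.
  by move: nk; rewrite kk (sel_cut h').
have npr : ~~ prv v f by apply/negP => /and4P[_ _ _ /negP]; apply; apply/existsP; exists v'.
have /existsP[w /andP[hw2 d]] := sel_K3 h ntc npr.
move: hw2 => /and5P[_ _ _ _ /existsP[k /andP[/andP[kf xk] /eqP kw]]].
have kin : inc u k by rewrite ux.
case: (two_edges du uf uf' ff kin) => kk; first by move: kf; rewrite kk eqxx.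
move: d; rewrite -kw kk ox (qcol_sel h) (qcol_sel h') => d; exact: d.
Qed.

Lemma QH1 u f f' : inc u f -> inc u f' -> f != f' -> isQ f -> isQ f' -> qcol f != qcol f'.
Proof.
move=> uf uf' ff /Qkind[nf|[v h]] /Qkind[nf'|[v' h']].
- by case: (same_two uf uf' ff nf nf').
- exact: QH1_ncS uf uf' ff nf h'.
- by rewrite eq_sym; apply: QH1_ncS uf' uf _ nf' h; rewrite eq_sym.
- exact: QH1_SS uf uf' ff h h'.
Qed.

Lemma oth_of a b g : inc a g -> inc b g -> a != b -> b = oth g a.
Proof. move=> ag bg ab; case: (inc_cases ag bg) => // ba; by move: ab; rewrite ba eqxx. Qed.

Lemma QH2_nc_g g a b f f' : inc a g -> inc b g -> a != b -> f != g -> f' != g ->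
  inc a f -> inc b f' -> isQ f -> isQ f' -> ~~ cut g -> False.
Proof.
move=> ag bg ab fg f'g af bf' qf qf' ng.
have bo := oth_of ag bg ab.
have db3 : dg b = 3.
  case: (Qkind qf) => [nf|[v h]]; first by case: (same_two af ag fg nf ng).
  have [bv vf] := sel_bi h.
  case: (inc_cases vf af) => aa; first by move: (nc_not_bad ng ag); rewrite aa bv.
  have gf : g != f by rewrite eq_sym.
  have xg : inc (oth f v) g by rewrite -aa.
  by rewrite bo aa; exact: tc_partner bv vf gf xg ng.
case: (Qkind qf') => [nf'|[v' h']]; first by case: (same_two bf' bg f'g nf' ng).
have [bv' v'f'] := sel_bi h'.
case: (inc_cases v'f' bf') => bb; first by move: (nc_not_bad ng bg); rewrite bb bv'.
by have := sel_oth_deg h'; rewrite -bb db3.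
Qed.

Lemma QH2_ncS g a b f f' v' : inc a g -> inc b g -> a != b -> f != g -> f' != g ->
  inc a f -> inc b f' -> cut g -> ~~ cut f -> sel v' = Some f' -> qcol f != qcol f'.
Proof.
move=> ag bg ab fg f'g af bf' cg nf h'.
have bo := oth_of ag bg ab.
have sb : s0 b = ~~ s0 a by rewrite bo; exact: cut_oth.
have [bv' v'f'] := sel_bi h'.
case: (inc_cases v'f' bf') => bb.
  have t : tc v' g.
    apply/and3P; split => //; first by rewrite -bb.
    apply/existsP; exists f; by rewrite fg -bb bo oth_oth // af nf.
  by rewrite (qcol_nc nf af) (qcol_sel h') (chi_tc t) -bb sb; case: (s0 a).
have db : dg b <= 2 by rewrite bb; exact: sel_oth_deg h'.
have gf' : g != f' by rewrite eq_sym.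
have ntc : ~~ tc v' f'.
  apply/negP => /and3P[_ _ /existsP[k /andP[/andP[kf xk] nk]]].
  have kin : inc b k by rewrite bb.
  case: (two_edges db bf' bg f'g kin) => kk; first by move: kf; rewrite kk eqxx.
  by move: nk; rewrite kk cg.
have nht : ~~ hit v' f'.
  apply/negP => /existsP[w /and5P[_ _ bw _ /existsP[k /andP[/andP[kf xk] /eqP kw]]]].
  have kin : inc b k by rewrite bb.
  case: (two_edges db bf' bg f'g kin) => kk; first by move: kf; rewrite kk eqxx.
  move: bw; rewrite -kw kk -bb bo oth_oth //.
  by move: (nc_not_bad nf af) => /negbTE ->.
have p : prv v' f' by apply/and4P.
have v'o : v' = oth f' b by rewrite bb oth_oth.
rewrite (qcol_nc nf af) (qcol_sel h') (chi_prv (sel_nontc h' ntc) p) v'o (cut_oth (sel_cut h') bf') sb.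
by case: (s0 a).
Qed.

Lemma QH2_vx g a b f f' v v' : inc a g -> inc b g -> a != b -> f' != g -> f != f' -> inc b f' ->
  sel v = Some f -> a = v -> sel v' = Some f' -> b = oth f' v' -> qcol f != qcol f'.
Proof.
move=> ag bg ab f'g ff bf' h av h' bb.
have bo := oth_of ag bg ab.
have [bv vf] := sel_bi h; have [bv' v'f'] := sel_bi h'.
have db : dg b <= 2 by rewrite bb; exact: sel_oth_deg h'.
have gf' : g != f' by rewrite eq_sym.
have cg : cut g by rewrite av in ag; exact: bad_cut bv ag.
have av' : a != v'.
  apply/eqP => e1; move: ff; rewrite -av e1 in h; rewrite h in h'; by case: h' => ->; rewrite eqxx.
have ntc : ~~ tc v' f'.
  apply/negP => /and3P[_ _ /existsP[k /andP[/andP[kf xk] nk]]].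
  have kin : inc b k by rewrite bb.
  case: (two_edges db bf' bg f'g kin) => kk; first by move: kf; rewrite kk eqxx.
  by move: nk; rewrite kk cg.
have hw : hitw v' f' a.
  apply/and5P; split => //; first by rewrite av.
  apply/existsP; exists g; by rewrite gf' -bb bg bo oth_oth // eqxx.
have npr : ~~ prv v' f' by apply/negP => /and4P[_ _ _ /negP]; apply; apply/existsP; exists a.
have /existsP[w /andP[hw2 d]] := sel_K3 h' ntc npr.
move: hw2 => /and5P[_ _ _ _ /existsP[k /andP[/andP[kf xk] /eqP kw]]].
have kin : inc b k by rewrite bb.
case: (two_edges db bf' bg f'g kin) => kk; first by move: kf; rewrite kk eqxx.
move: d; rewrite -kw kk -bb bo oth_oth // av (qcol_sel h) (qcol_sel h') eq_sym => d; exact: d.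
Qed.

Lemma chi_xside g a f v : sel v = Some f -> a = oth f v -> inc a g -> g != f -> cut g ->
  ~~ bad (oth g a) -> chi t0 v = s0 a.
Proof.
move=> h ao ag gf cg nb.
have [bv vf] := sel_bi h.
have da : dg a <= 2 by rewrite ao; exact: sel_oth_deg h.
have af : inc a f by rewrite ao; exact: inc_oth.
have fg : f != g by rewrite eq_sym.
have ntc : ~~ tc v f.
  apply/negP => /and3P[_ _ /existsP[k /andP[/andP[kf xk] nk]]].
  have kin : inc a k by rewrite ao.
  case: (two_edges da af ag fg kin) => kk; first by move: kf; rewrite kk eqxx.
  by move: nk; rewrite kk cg.
have nht : ~~ hit v f.
  apply/negP => /existsP[w /and5P[_ _ bw _ /existsP[k /andP[/andP[kf xk] /eqP kw]]]].
  have kin : inc a k by rewrite ao.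
  case: (two_edges da af ag fg kin) => kk; first by move: kf; rewrite kk eqxx.
  by move: bw nb; rewrite -kw kk -ao => ->.
have p : prv v f by apply/and4P.
have vo : v = oth f a by rewrite ao oth_oth.
by rewrite (chi_prv (sel_nontc h ntc) p) vo (cut_oth (sel_cut h) af) negbK.
Qed.

Lemma QH2 g a b f f' : inc a g -> inc b g -> a != b -> f != g -> f' != g -> f != f' ->
  inc a f -> inc b f' -> isQ f -> isQ f' -> qcol f != qcol f'.
Proof.
move=> ag bg ab fg f'g ff af bf' qf qf'.
case cg: (cut g); last by case: (QH2_nc_g ag bg ab fg f'g af bf' qf qf'); rewrite cg.
have bo := oth_of ag bg ab.
have sb : s0 b = ~~ s0 a by rewrite bo; exact: cut_oth.
case: (Qkind qf) => [nf|[v h]]; case: (Qkind qf') => [nf'|[v' h']].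
- by rewrite (qcol_nc nf af) (qcol_nc nf' bf') sb; case: (s0 a).
- exact: QH2_ncS ag bg ab fg f'g af bf' cg nf h'.
- rewrite eq_sym; apply: (QH2_ncS bg ag _ f'g fg bf' af cg nf' h); by rewrite eq_sym.
have [bv vf] := sel_bi h; have [bv' v'f'] := sel_bi h'.
case: (inc_cases vf af) => aa; case: (inc_cases v'f' bf') => bb.
- have ba : bad a by rewrite aa.
  by have := nbr_not_bad ba ag; rewrite -bo bb bv'.
- exact: QH2_vx ag bg ab f'g ff bf' h aa h' bb.
- rewrite eq_sym; apply: (QH2_vx bg ag _ fg _ af h' bb h aa); by rewrite eq_sym.
have ba' : b != a by rewrite eq_sym.
have ao := oth_of bg ag ba'.
have nb1 : ~~ bad (oth g a) by rewrite -bo bb; exact: nbr_not_bad bv' v'f'.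
have nb2 : ~~ bad (oth g b) by rewrite -ao aa; exact: nbr_not_bad bv vf.
have gf : g != f by rewrite eq_sym.
have gf' : g != f' by rewrite eq_sym.
rewrite (qcol_sel h) (qcol_sel h') (chi_xside h aa ag gf cg nb1) (chi_xside h' bb bg gf' cg nb2) sb.
by case: (s0 a).
Qed.

Definition Pset := [set e | ~~ isQ e].

Lemma P_cut e : e \in Pset -> s0 (ends e).1 != s0 (ends e).2.
Proof. by rewrite inE /isQ negb_or negbK => /andP[]. Qed.

Lemma P_deg u : Pdeg ends Pset u <= 2.
Proof.
rewrite /Pdeg.
have hsub : [set e in Pset | inc u e] \subset iset ends u.
  by apply/subsetP => e; rewrite !inE => /andP[].
case: (ltnP (dg u) 3) => [lt|ge].
  by apply: leq_trans (subset_leq_card hsub) _; rewrite -deg_iset -ltnS.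
have d3 : dg u = 3 by apply/eqP; rewrite eqn_leq Hsc ge.
have [e0 [ue0 qe0]] : exists e0, inc u e0 /\ isQ e0.
  case bu: (bad u).
    have [e0 h0] := sel_some bu; exists e0; split; first by case: (sel_bi h0).
    by rewrite /isQ; apply/orP; right; apply/existsP; exists u; rewrite h0.
  move/negbT: bu; rewrite /bad /badb d3 eqxx /= negb_forall => /existsP[e0]; rewrite negb_imply => /andP[ue0 ne0].
  by exists e0; split => //; rewrite /isQ ne0.
have hsub2 : [set e in Pset | inc u e] \subset iset ends u :\ e0.
  apply/subsetP => e; rewrite !inE => /andP[ne ue]; rewrite ue andbT.
  by apply/eqP => ee; move: ne; rewrite ee qe0.
apply: leq_trans (subset_leq_card hsub2) _.
have := cardsD1 e0 (iset ends u); rewrite inE ue0 -deg_iset d3 add1n => [[<-]].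
by [].
Qed.

Lemma main_exists : exists c : E -> 'I_4, packing_1122 ends c.
Proof.
have [ab hab] := ab_exists (sg := s0) (leqnn #|Pset|) P_cut P_deg.
pose cv e : nat := if isQ e then 2 + qcol e else ab e.
have cvlt : forall e, cv e < 4 by move=> e; rewrite /cv; case: (isQ e); case: (qcol e); case: (ab e).
exists (fun e => inord (cv e)).
have vE : forall e, val (inord (cv e) : 'I_4) = cv e by move=> e; exact: inordK.
apply: packing_of_local.
  move=> u f f' uf uf' ff; rewrite -val_eqE /= !vE /cv.
  case qf: (isQ f); case qf': (isQ f').
  - have := QH1 uf uf' ff qf qf'; by case: (qcol f); case: (qcol f').
  - by case: (qcol f); case: (ab f').
  - by case: (qcol f'); case: (ab f).
  - have fP : f \in Pset by rewrite inE qf.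
    have f'P : f' \in Pset by rewrite inE qf'.
    have := hab u f f' fP f'P uf uf' ff; by case: (ab f); case: (ab f').
move=> g a b f f' ag bg ab' fg f'g ff af bf' /(congr1 val); rewrite /= !vE /cv.
case qf: (isQ f); last by case: (ab f).
case qf': (isQ f') => e.
  have := QH2 ag bg ab' fg f'g ff af bf' qf qf'.
  by move: e; case: (qcol f); case: (qcol f').
by move: e; case: (qcol f); case: (ab f').
Qed.

End Main.

Unset Implicit Arguments.

Theorem theorem1 (V E : finType) (ends : E -> V * V) :
  loopless ends -> subcubic ends -> three_irregular ends ->
  exists c : E -> 'I_4, packing_1122 ends c.
Proof. by move=> Hll Hsc Hirr; exact: main_exists. Qed.
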